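(* Let $X,Y$ be uniform spaces and $f\colon X\to Y$ a function generating the uniform structure on $Y$. Then $f$ is a uniform covering map if and only if (a) $f$ has the chain lifting property and (b) $f$ has the uniqueness of chain lifts property.
   Context: Notation: entourages are symmetric and contain the diagonal; $B(x,E)=\{y:(x,y)\in E\}$; $f(E)=\{(f(x),f(y)):(x,y)\in E\}$. A surjection $f\colon X\to Y$ generates the uniform structure on $Y$ if $\{f(E)\}$ ($E$ entourage of $X$) is a base of the uniform structure of $Y$. The Rips complex $R(X,E)$ is the simplicial complex with vertex set $X$ whose simplices are finite $F\subset X$ with $F\times F\subset E$; $f_E\colon R(X,E)\to R(Y,f(E))$ is the induced simplicial map. $f$ is a uniform covering map if it generates the uniform structure on $Y$ and the entourages $E$ of $X$ for which $f_E$ is a topological covering map form a base of $X$. An $E$-chain is a sequence $x_0,\dots,x_n$ with $(x_i,x_{i+1})\in E$. $f$ has the chain lifting property if for every entourage $E$ of $X$ there is an entourage $F$ of $X$ such that every $f(F)$-chain in $Y$ starting at $f(x_0)$ lifts (via $f$) to an $E$-chain in $X$ starting at $x_0$, for every $x_0\in X$. $f$ has the uniqueness of chain lifts property if for every entourage $E$ there is an entourage $F$ such that any two $F$-chains with common origin and identical images under $f$ are equal. *)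

(* Defs.v *)
From Stdlib Require Import Reals List Classical ClassicalEpsilon.
Open Scope R_scope.
Set Implicit Arguments.

(* Convention of the paper: entourages are symmetric and contain the diagonal. *)
Definition reflexive_rel {X} (E : X -> X -> Prop) := forall x, E x x.
Definition symmetric_rel {X} (E : X -> X -> Prop) := forall x y, E x y -> E y x.

Definition is_uniformity {X : Type} (U : (X -> X -> Prop) -> Prop) : Prop :=
  (forall E, U E -> reflexive_rel E) /\
  (forall E, U E -> symmetric_rel E) /\
  (exists E, U E) /\
  (forall E1 E2, U E1 -> U E2 -> U (fun x y => E1 x y /\ E2 x y)) /\
  (forall E F, U E -> (forall x y, E x y -> F x y) ->
     reflexive_rel F -> symmetric_rel F -> U F) /\
  (forall E, U E -> exists F, U F /\ forall x y z, F x y -> F y z -> E x z).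

Definition img_rel {X Y} (f : X -> Y) (E : X -> X -> Prop) : Y -> Y -> Prop :=
  fun y1 y2 => exists x1 x2, E x1 x2 /\ f x1 = y1 /\ f x2 = y2.

Definition surjective {X Y} (f : X -> Y) := forall y, exists x, f x = y.

Definition generates_uniformity {X Y} (UX : (X -> X -> Prop) -> Prop)
    (UY : (Y -> Y -> Prop) -> Prop) (f : X -> Y) : Prop :=
  surjective f /\
  (forall E, UX E -> UY (img_rel f E)) /\
  (forall D, UY D -> exists E, UX E /\ forall y1 y2, img_rel f E y1 y2 -> D y1 y2).

Definition lsum {X} (l : list X) (t : X -> R) : R := fold_right Rplus 0 (map t l).

(* a finite F (given as a duplicate-free list) with F x F ⊆ E *)
Definition rips_simplex {X} (E : X -> X -> Prop) (l : list X) : Prop :=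
  NoDup l /\ forall x y, In x l -> In y l -> E x y.

(* points of |R(X,E)|: barycentric coordinate functions supported on a simplex *)
Definition rips_point {X} (E : X -> X -> Prop) (t : X -> R) : Prop :=
  (forall x, 0 <= t x) /\
  exists l, rips_simplex E l /\ (forall x, t x <> 0 -> In x l) /\ lsum l t = 1.

Definition in_closed_simplex {X} (E : X -> X -> Prop) (l : list X) (t : X -> R) :=
  rips_point E t /\ forall x, t x <> 0 -> In x l.

(* Weak topology: U is open iff its trace on every closed simplex is open
   in the Euclidean topology of that simplex. *)
Definition rips_open {X} (E : X -> X -> Prop) (U : (X -> R) -> Prop) : Prop :=
  forall l, rips_simplex E l ->
  forall t, in_closed_simplex E l t -> U t ->
  exists eps, 0 < eps /\
    forall s, in_closed_simplex E l s ->
      (forall x, In x l -> Rabs (s x - t x) < eps) -> U s.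

(* the induced simplicial map f_E on realizations:
   (f_E t)(y) = sum of t x over x with f x = y *)
Definition supp_list {X} (t : X -> R) : list X :=
  epsilon (inhabits nil) (fun l => NoDup l /\ forall x, t x <> 0 -> In x l).

Definition push {X Y} (f : X -> Y) (t : X -> R) : Y -> R :=
  fun y => lsum (supp_list t)
             (fun x => if excluded_middle_informative (f x = y) then t x else 0).

(* Spaces are given as a domain predicate on an ambient type together with a
   predicate of open sets (opens being taken relative to the domain). *)
Definition covering_map {T S} (DA : T -> Prop) (OA : (T -> Prop) -> Prop)
    (DB : S -> Prop) (OB : (S -> Prop) -> Prop) (p : T -> S) : Prop :=
  (forall a, DA a -> DB (p a)) /\
  (forall b, DB b -> exists a, DA a /\ p a = b) /\
  (forall V, OB V -> OA (fun a => DA a /\ V (p a))) /\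
  (forall b, DB b -> exists V, OB V /\ V b /\
     exists Sh : (T -> Prop) -> Prop,
       (forall W, Sh W -> OA W /\ forall a, W a -> DA a /\ V (p a)) /\
       (forall a, DA a -> V (p a) -> exists W, Sh W /\ W a) /\
       (forall W1 W2, Sh W1 -> Sh W2 -> (exists a, W1 a /\ W2 a) ->
          forall a, W1 a <-> W2 a) /\
       (forall W, Sh W ->
          (* p|W is a homeomorphism onto V *)
          (forall a1 a2, W a1 -> W a2 -> p a1 = p a2 -> a1 = a2) /\
          (forall b', DB b' -> V b' -> exists a, W a /\ p a = b') /\
          (forall O, OA O -> (forall a, O a -> W a) ->
             OB (fun b' => exists a, O a /\ p a = b')))).

Definition rips_covering {X Y} (f : X -> Y) (E : X -> X -> Prop) : Prop :=
  covering_map (rips_point E) (rips_open E)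
               (rips_point (img_rel f E)) (rips_open (img_rel f E)) (push f).

Definition uniform_covering_map {X Y} (UX : (X -> X -> Prop) -> Prop)
    (UY : (Y -> Y -> Prop) -> Prop) (f : X -> Y) : Prop :=
  generates_uniformity UX UY f /\
  forall D, UX D -> exists E, UX E /\ (forall x y, E x y -> D x y) /\
    rips_covering f E.

(* chain_from E x0 [x1;...;xn] : x0,x1,...,xn is an E-chain *)
Fixpoint chain_from {X} (E : X -> X -> Prop) (x : X) (l : list X) : Prop :=
  match l with
  | nil => True
  | y :: l' => E x y /\ chain_from E y l'
  end.

Definition chain_lifting {X Y} (UX : (X -> X -> Prop) -> Prop) (f : X -> Y) : Prop :=
  forall E, UX E -> exists F, UX F /\
    forall (x0 : X) (ys : list Y), chain_from (img_rel f F) (f x0) ys ->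
      exists xs, chain_from E x0 xs /\ map f xs = ys.

Definition unique_chain_lifts {X Y} (UX : (X -> X -> Prop) -> Prop) (f : X -> Y) : Prop :=
  forall E, UX E -> exists F, UX F /\
    forall (x0 : X) (xs1 xs2 : list X),
      chain_from F x0 xs1 -> chain_from F x0 xs2 -> map f xs1 = map f xs2 ->
      xs1 = xs2.

(* Main.v *)
Require Import Defs.
From Stdlib Require Import Reals List Classical ClassicalEpsilon Lra Permutation FunctionalExtensionality.
Open Scope R_scope.

Lemma lsum_cons {X} (a:X) l t : lsum (a::l) t = t a + lsum l t.
Proof. reflexivity. Qed.
Lemma lsum_nil {X} (t : X -> R) : lsum nil t = 0.
Proof. reflexivity. Qed.

Lemma lsum_ext {X} (l : list X) g h : (forall x, In x l -> g x = h x) -> lsum l g = lsum l h.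
Proof.
  induction l as [|a l IH]; intros H; [reflexivity|].
  rewrite !lsum_cons, H by (left; auto). rewrite IH; auto. intros; apply H; right; auto.
Qed.

Lemma lsum_plus {X} (l:list X) g h : lsum l (fun x => g x + h x) = lsum l g + lsum l h.
Proof. induction l; rewrite ?lsum_cons, ?lsum_nil; [lra|]. rewrite IHl. lra. Qed.

Lemma lsum_zero {X} (l:list X) g : (forall x, In x l -> g x = 0) -> lsum l g = 0.
Proof.
  induction l as [|a l IH]; intros H; [reflexivity|].
  rewrite lsum_cons, H by (simpl; auto). rewrite IH. lra. intros; apply H; right; auto.
Qed.

Lemma lsum_nonneg {X} (l:list X) g : (forall x, In x l -> 0 <= g x) -> 0 <= lsum l g.
Proof.
  induction l as [|a l IH]; intros H; rewrite ?lsum_cons, ?lsum_nil; [lra|].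
  assert (0 <= g a) by (apply H; left; auto).
  assert (0 <= lsum l g) by (apply IH; intros; apply H; right; auto). lra.
Qed.

Lemma lsum_abs_bound {X} (l:list X) g e : (forall x, In x l -> Rabs (g x) <= e) ->
  Rabs (lsum l g) <= INR (length l) * e.
Proof.
  induction l as [|a l IH]; intros H; rewrite ?lsum_cons, ?lsum_nil.
  - simpl. rewrite Rabs_R0. lra.
  - simpl length. rewrite S_INR.
    assert (Rabs (g a) <= e) by (apply H; left; auto).
    assert (Rabs (lsum l g) <= INR (length l) * e) by (apply IH; intros; apply H; right; auto).
    pose proof (Rabs_triang (g a) (lsum l g)). lra.
Qed.

Lemma lsum_nonzero {X} (l:list X) g : lsum l g <> 0 -> exists x, In x l /\ g x <> 0.
Proof.
  induction l as [|a l IH]; intros H; rewrite ?lsum_cons, ?lsum_nil in H; [lra|].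
  destruct (Req_dec (g a) 0) as [E|E].
  - destruct IH as [x [Hx Hg]]. lra. exists x; split; [right|]; auto.
  - exists a; split; [left|]; auto.
Qed.

Lemma lsum_delta {X} (l:list X) g a : NoDup l -> In a l ->
  (forall y, In y l -> g y <> 0 -> y = a) -> lsum l g = g a.
Proof.
  induction l as [|b l IH]; intros Hnd Ha H; [destruct Ha|].
  inversion Hnd; subst. rewrite lsum_cons.
  destruct Ha as [<-|Ha].
  - rewrite lsum_zero. lra. intros y Hy.
    destruct (Req_dec (g y) 0); auto. exfalso. assert (y = b) by (apply H; [right|]; auto). subst; auto.
  - assert (b <> a) by (intro; subst; auto).
    assert (g b = 0) by (destruct (Req_dec (g b) 0); auto; exfalso; apply H0; apply H; [left|]; auto).
    rewrite IH; auto. lra. intros; apply H; [right|]; auto.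
Qed.

Lemma lsum_perm {X} (l1 l2:list X) g : Permutation l1 l2 -> lsum l1 g = lsum l2 g.
Proof.
  induction 1; rewrite ?lsum_cons; auto.
  - rewrite IHPermutation; auto.
  - lra.
  - congruence.
Qed.

Definition nzb {X} (g : X -> R) (x : X) : bool :=
  if excluded_middle_informative (g x = 0) then false else true.

Lemma lsum_filter {X} (l:list X) g : lsum l g = lsum (filter (nzb g) l) g.
Proof.
  induction l as [|a l IH]; [reflexivity|]. simpl filter. unfold nzb at 1.
  destruct (excluded_middle_informative (g a = 0)) as [E|E]; rewrite ?lsum_cons, IH; [lra|]. reflexivity.
Qed.

Lemma lsum_indep {X} (l1 l2:list X) g : NoDup l1 -> NoDup l2 ->
  (forall x, g x <> 0 -> In x l1) -> (forall x, g x <> 0 -> In x l2) -> lsum l1 g = lsum l2 g.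
Proof.
  intros N1 N2 H1 H2. rewrite (lsum_filter l1), (lsum_filter l2).
  apply lsum_perm, NoDup_Permutation; try apply NoDup_filter; auto.
  intros x. rewrite !filter_In. unfold nzb.
  destruct (excluded_middle_informative (g x = 0)); split; intros [_ B]; try discriminate; auto.
Qed.

Notation dec := excluded_middle_informative.

Lemma push_eq {X Y} (f : X -> Y) t l y : NoDup l -> (forall x, t x <> 0 -> In x l) ->
  push f t y = lsum l (fun x => if dec (f x = y) then t x else 0).
Proof.
  intros N H. unfold push.
  assert (S : NoDup (supp_list t) /\ forall x, t x <> 0 -> In x (supp_list t)).
  { unfold supp_list. apply epsilon_spec. exists l; auto. }
  destruct S as [S1 S2]. apply lsum_indep; auto;
  intros x; destruct (dec (f x = y)); intros Hx; try (exfalso; apply Hx; reflexivity); auto.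
Qed.

Lemma push_support {X Y} (f : X -> Y) t y : push f t y <> 0 -> exists x, t x <> 0 /\ f x = y.
Proof.
  unfold push. intros H. apply lsum_nonzero in H. destruct H as [x [_ Hx]].
  destruct (dec (f x = y)); [exists x; auto|]. exfalso; apply Hx; reflexivity.
Qed.

Lemma push_nonneg {X Y} (f : X -> Y) t y : (forall x, 0 <= t x) -> 0 <= push f t y.
Proof.
  intros H. unfold push. apply lsum_nonneg. intros x _. destruct (dec (f x = y)); auto; lra.
Qed.

Lemma lsum_exch {X Y} (l : list X) (m : list Y) (k : Y -> X -> R) :
  lsum m (fun y => lsum l (fun x => k y x)) = lsum l (fun x => lsum m (fun y => k y x)).
Proof.
  induction l as [|a l IH].
  - rewrite lsum_nil. apply lsum_zero. intros; reflexivity.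
  - rewrite lsum_cons. rewrite <- IH. rewrite <- lsum_plus. apply lsum_ext. intros; reflexivity.
Qed.

Definition ndp {Y} (m : list Y) := nodup (fun a b : Y => dec (a = b)) m.

Lemma push_point {X Y} (f : X -> Y) E t : rips_point E t -> rips_point (img_rel f E) (push f t).
Proof.
  intros [Hnn [l [[N Hp] [Hs Hsum]]]]. split; [intros; apply push_nonneg; auto|].
  exists (ndp (map f l)). assert (Nm : NoDup (ndp (map f l))) by apply NoDup_nodup.
  split; [split|split]; auto.
  - intros a b Ha Hb. unfold ndp in *. rewrite nodup_In, in_map_iff in Ha, Hb.
    destruct Ha as [x [<- Hx]]. destruct Hb as [x' [<- Hx']]. exists x, x'; auto.
  - intros y Hy. apply push_support in Hy. destruct Hy as [x [Hx <-]]. unfold ndp.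
    rewrite nodup_In. apply in_map; auto.
  - rewrite (lsum_ext _ _ (fun y => lsum l (fun x => if dec (f x = y) then t x else 0)))
      by (intros; apply push_eq; auto).
    rewrite lsum_exch. rewrite <- Hsum. apply lsum_ext. intros x Hx.
    rewrite (lsum_delta _ _ (f x)); auto.
    + destruct (dec (f x = f x)); [reflexivity| exfalso; auto].
    + unfold ndp; rewrite nodup_In; apply in_map; auto.
    + intros y _. destruct (dec (f x = y)); auto. intros H; exfalso; apply H; reflexivity.
Qed.

Definition edge {X} (a b : X) (s : R) : X -> R := fun z =>
  (if dec (z = a) then 1 - s else 0) + (if dec (z = b) then s else 0).
Definition pl {X} (a b : X) : list X := if dec (a = b) then a :: nil else a :: b :: nil.

Lemma pl_nodup {X} (a b : X) : NoDup (pl a b).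
Proof.
  unfold pl; destruct (dec (a = b)); repeat constructor; simpl; intuition.
Qed.
Lemma pl_in_a {X} (a b : X) : In a (pl a b).
Proof. unfold pl; destruct (dec (a = b)); simpl; auto. Qed.
Lemma pl_in_b {X} (a b : X) : In b (pl a b).
Proof. unfold pl; destruct (dec (a = b)); simpl; auto. Qed.
Lemma pl_in {X} (a b z : X) : In z (pl a b) -> z = a \/ z = b.
Proof. unfold pl; destruct (dec (a = b)); simpl; intuition. Qed.

Lemma edge_supp {X} (a b : X) s z : edge a b s z <> 0 -> In z (pl a b).
Proof.
  unfold edge. destruct (dec (z = a)); [subst; intros; apply pl_in_a|].
  destruct (dec (z = b)); [subst; intros; apply pl_in_b|]. intros H; lra.
Qed.

Lemma edge_sum {X} (a b : X) s : lsum (pl a b) (edge a b s) = 1.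
Proof.
  unfold edge. rewrite lsum_plus.
  rewrite (lsum_delta _ _ a), (lsum_delta _ (fun z => if dec (z = b) then s else 0) b);
    auto using pl_nodup, pl_in_a, pl_in_b.
  - destruct (dec (a = a)); destruct (dec (b = b)); try tauto. lra.
  - intros y _. destruct (dec (y = b)); auto. intros H; lra.
  - intros y _. destruct (dec (y = a)); auto. intros H; lra.
Qed.

Lemma pl_simplex {X} (E : X -> X -> Prop) a b : reflexive_rel E -> symmetric_rel E -> E a b ->
  rips_simplex E (pl a b).
Proof.
  intros R S H. split; [apply pl_nodup|]. intros x y Hx Hy.
  apply pl_in in Hx; apply pl_in in Hy. destruct Hx, Hy; subst; auto.
Qed.

Lemma edge_closed {X} (E : X -> X -> Prop) a b s : reflexive_rel E -> symmetric_rel E -> E a b ->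
  0 <= s <= 1 -> in_closed_simplex E (pl a b) (edge a b s).
Proof.
  intros R S H Hs. split; [|apply edge_supp].
  split. - intros z; unfold edge; destruct (dec (z = a)); destruct (dec (z = b)); lra.
  - exists (pl a b). split; [apply pl_simplex; auto|]. split; [apply edge_supp|apply edge_sum].
Qed.

Lemma push_edge {X Y} (f : X -> Y) a b s : push f (edge a b s) = edge (f a) (f b) s.
Proof.
  apply functional_extensionality. intros y.
  rewrite (push_eq _ _ (pl a b)); [|apply pl_nodup|apply edge_supp].
  unfold edge at 1.
  rewrite (lsum_ext _ _ (fun z => (if dec (f z = y) then (if dec (z = a) then 1 - s else 0) else 0)
    + (if dec (f z = y) then (if dec (z = b) then s else 0) else 0))).
  2:{ intros z _. destruct (dec (f z = y)); lra. }
  rewrite lsum_plus.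
  rewrite (lsum_delta _ _ a), (lsum_delta _ (fun z => if dec (f z = y) then (if dec (z = b) then s else 0) else 0) b);
    auto using pl_nodup, pl_in_a, pl_in_b.
  - unfold edge. destruct (dec (a = a)); [|tauto]. destruct (dec (b = b)); [|tauto].
    destruct (dec (f a = y)), (dec (y = f a)), (dec (f b = y)), (dec (y = f b)); try congruence; lra.
  - intros z _. destruct (dec (f z = y)); [destruct (dec (z = b))|]; auto; intros H; lra.
  - intros z _. destruct (dec (f z = y)); [destruct (dec (z = a))|]; auto; intros H; lra.
Qed.

Lemma edge_close {X} (a b : X) s z : 0 <= s <= 1 -> Rabs (edge a b s z - edge a a 0 z) <= s.
Proof.
  intros Hs. apply Rabs_le. unfold edge.
  destruct (dec (z = a)), (dec (z = b)); lra.
Qed.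

Lemma edge_at_a {X} (a b : X) s : 0 <= s <= 1 -> 0 < edge a a 0 a.
Proof. intros. unfold edge. destruct (dec (a = a)); [|tauto]. lra. Qed.

Lemma vertex_closed {X} (E : X -> X -> Prop) x a : reflexive_rel E -> symmetric_rel E -> E x a ->
  in_closed_simplex E (pl x a) (edge x x 0).
Proof.
  intros R S H. split.
  - apply (edge_closed E x x 0 R S (R x)). lra.
  - intros z Hz. apply edge_supp, pl_in in Hz. destruct Hz; subst; apply pl_in_a.
Qed.

Lemma star_open {X} (E : X -> X -> Prop) W x0 : rips_open E W -> rips_open E (fun t => W t /\ 0 < t x0).
Proof.
  intros HW l Hl t Hct [Wt Pt]. destruct (HW l Hl t Hct Wt) as [e [ep He]].
  exists (Rmin e (t x0)). split; [apply Rmin_pos; auto|].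
  intros s Hcs Hcl. split.
  - apply He; auto. intros z Hz. specialize (Hcl z Hz). pose proof (Rmin_l e (t x0)). lra.
  - assert (In x0 l) by (apply (proj2 Hct); lra).
    specialize (Hcl x0 H). apply Rabs_def2 in Hcl. pose proof (Rmin_r e (t x0)). lra.
Qed.

Lemma cov_unique {X Y} (f : X -> Y) (E : X -> X -> Prop) : reflexive_rel E -> symmetric_rel E ->
  rips_covering f E -> forall x a b, E x a -> E x b -> f a = f b -> a = b.
Proof.
  intros R S [_ [_ [_ Hev]]] x a b Ha Hb Hf.
  set (v := edge x x 0).
  assert (Dv : rips_point E v) by (apply (edge_closed E x x 0 R S (R x)); lra).
  destruct (Hev (push f v) (push_point f E v Dv)) as [V [OV [Vb [Sh [Hsh [Hcov [_ Hhom]]]]]]].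
  destruct (Hcov v Dv Vb) as [W [ShW Wv]].
  destruct (Hsh W ShW) as [OAW WDA].
  destruct (OAW (pl x a) (pl_simplex E x a R S Ha) v (vertex_closed E x a R S Ha) Wv) as [e1 [e1p H1]].
  destruct (OAW (pl x b) (pl_simplex E x b R S Hb) v (vertex_closed E x b R S Hb) Wv) as [e2 [e2p H2]].
  set (s := Rmin (Rmin e1 e2) 1 / 2).
  assert (sp : 0 < s) by (unfold s; apply Rdiv_lt_0_compat; [repeat apply Rmin_pos|]; lra).
  assert (s1 : s <= 1) by (unfold s; pose proof (Rmin_r (Rmin e1 e2) 1); lra).
  assert (se1 : s < e1) by (unfold s; pose proof (Rmin_l (Rmin e1 e2) 1); pose proof (Rmin_l e1 e2); lra).
  assert (se2 : s < e2) by (unfold s; pose proof (Rmin_l (Rmin e1 e2) 1); pose proof (Rmin_r e1 e2); lra).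
  assert (Wa : W (edge x a s)).
  { apply H1. apply edge_closed; auto; lra. intros z _. pose proof (edge_close x a s z). unfold v. lra. }
  assert (Wb : W (edge x b s)).
  { apply H2. apply edge_closed; auto; lra. intros z _. pose proof (edge_close x b s z). unfold v. lra. }
  destruct (Hhom W ShW) as [Hinj _].
  pose proof (Hinj _ _ Wa Wb ltac:(rewrite !push_edge, Hf; reflexivity)) as Heq.
  apply NNPP; intros Hne.
  pose proof (equal_f Heq a) as Hq. unfold edge in Hq.
  destruct (dec (a = x)), (dec (a = a)), (dec (a = b)); try congruence; lra.
Qed.

Lemma cov_lift {X Y} (f : X -> Y) (E : X -> X -> Prop) : reflexive_rel E -> symmetric_rel E ->
  reflexive_rel (img_rel f E) -> symmetric_rel (img_rel f E) ->
  rips_covering f E -> forall x0 y, img_rel f E (f x0) y -> exists x1, E x0 x1 /\ f x1 = y.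
Proof.
  intros R S RY SY [_ [_ [_ Hev]]] x0 y Hy.
  destruct (dec (y = f x0)) as [Ey|Ny]; [exists x0; auto|].
  set (v := edge x0 x0 0).
  assert (Dv : rips_point E v) by (apply (edge_closed E x0 x0 0 R S (R x0)); lra).
  destruct (Hev (push f v) (push_point f E v Dv)) as [V [OV [Vb [Sh [Hsh [Hcov [_ Hhom]]]]]]].
  destruct (Hcov v Dv Vb) as [W [ShW Wv]].
  destruct (Hsh W ShW) as [OAW WDA].
  destruct (Hhom W ShW) as [_ [_ Hop]].
  specialize (Hop (fun t => W t /\ 0 < t x0) (star_open E W x0 OAW) (fun t H => proj1 H)).
  assert (Hv : push f v = edge (f x0) (f x0) 0) by apply push_edge.
  destruct (Hop (pl (f x0) y) (pl_simplex _ _ _ RY SY Hy) (push f v))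
    as [e [ep He]].
  { rewrite Hv. apply vertex_closed; auto. }
  { exists v. split; auto. split; auto. unfold v, edge. destruct (dec (x0 = x0)); [lra|congruence]. }
  set (s := Rmin e 1 / 2).
  assert (sp : 0 < s) by (unfold s; apply Rdiv_lt_0_compat; [repeat apply Rmin_pos|]; lra).
  assert (s1 : s <= 1) by (unfold s; pose proof (Rmin_r e 1); lra).
  assert (se : s < e) by (unfold s; pose proof (Rmin_l e 1); lra).
  destruct (He (edge (f x0) y s)) as [t [[Wt Pt] Ht]].
  { apply edge_closed; auto; lra. }
  { intros z _. rewrite Hv. pose proof (edge_close (f x0) y s z). lra. }
  assert (Hty : push f t y <> 0).
  { rewrite Ht. unfold edge. destruct (dec (y = f x0)); [congruence|]. destruct (dec (y = y)); [lra|congruence]. }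
  destruct (push_support f t y Hty) as [w [Hw Hfw]].
  destruct (WDA t Wt) as [[_ [lt [[_ Hp] [Hs _]]]] _].
  exists w. split; auto. apply Hp; apply Hs; lra.
Qed.

Lemma forward {X Y} (UX : (X -> X -> Prop) -> Prop) (UY : (Y -> Y -> Prop) -> Prop) (f : X -> Y) :
  is_uniformity UX -> uniform_covering_map UX UY f -> chain_lifting UX f /\ unique_chain_lifts UX f.
Proof.
  intros HX [[Hsurj _] Hc]. destruct HX as [HR [HS _]].
  assert (RY : forall E, reflexive_rel E -> reflexive_rel (img_rel f E)).
  { intros E R y. destruct (Hsurj y) as [x <-]. exists x, x; auto. }
  assert (SY : forall E, symmetric_rel E -> symmetric_rel (img_rel f E)).
  { intros E S y1 y2 [a [b [H [<- <-]]]]. exists b, a; auto. }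
  split.
  - intros E HE. destruct (Hc E HE) as [E' [HE' [Hsub Hrc]]]. exists E'. split; auto.
    intros x0 ys. revert x0. induction ys as [|y ys IH]; intros x0 Hch.
    + exists nil. simpl; auto.
    + destruct Hch as [H1 H2].
      destruct (cov_lift f E' (HR _ HE') (HS _ HE') (RY _ (HR _ HE')) (SY _ (HS _ HE')) Hrc x0 y H1)
        as [x1 [Hx1 <-]].
      destruct (IH x1 H2) as [xs [Hxs Hm]]. exists (x1 :: xs). simpl. split; [split|]; auto.
      congruence.
  - intros E HE. destruct (Hc E HE) as [E' [HE' [Hsub Hrc]]]. exists E'. split; auto.
    intros x0 xs1. revert x0. induction xs1 as [|a xs1 IH]; intros x0 xs2 H1 H2 Hm.
    + destruct xs2; [reflexivity|discriminate].
    + destruct xs2 as [|b xs2]; [discriminate|]. simpl in Hm. injection Hm as Hab Hm.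
      destruct H1 as [H1a H1r]. destruct H2 as [H2a H2r].
      assert (a = b) by (apply (cov_unique f E' (HR _ HE') (HS _ HE') Hrc x0); auto).
      subst b. f_equal. apply (IH a); auto.
Qed.

Definition good {X Y} (f : X -> Y) (E : X -> X -> Prop) :=
  reflexive_rel E /\ symmetric_rel E /\
  (forall x y, img_rel f E (f x) y -> exists x', E x x' /\ f x' = y) /\
  (forall x a b c, E x a -> E a b -> E x c -> f b = f c -> b = c).

Lemma good_P2 {X Y} (f : X -> Y) E : good f E -> forall x a b, E x a -> E x b -> f a = f b -> a = b.
Proof. intros [R [S [P1 P3]]] x a b Ha Hb H. apply (P3 x x a b); auto. Qed.

Lemma good_L1 {X Y} (f : X -> Y) E : good f E -> forall x zi zj, E x zi -> E x zj ->
  img_rel f E (f zi) (f zj) -> E zi zj.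
Proof.
  intros G x zi zj Hi Hj Hr. destruct G as [R [S [P1 P3]]].
  destruct (P1 zi (f zj) Hr) as [x'' [H1 H2]].
  assert (x'' = zj) by (apply (P3 x zi x'' zj); auto). subst; auto.
Qed.

Lemma star_sub {X} (E : X -> X -> Prop) t x z : rips_point E t -> t x <> 0 -> t z <> 0 -> E x z.
Proof. intros [_ [l [[_ Hp] [Hs _]]]] Hx Hz. apply Hp; apply Hs; auto. Qed.

Lemma lsum_map {X Y} (f : X -> Y) l u : lsum (map f l) u = lsum l (fun z => u (f z)).
Proof. unfold lsum. rewrite map_map. reflexivity. Qed.

Lemma lsum_minus {X} (l:list X) g h : lsum l g - lsum l h = lsum l (fun x => g x - h x).
Proof. induction l; rewrite ?lsum_cons, ?lsum_nil; [lra|]. rewrite <- IHl. lra. Qed.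

Definition Lx {X Y} (f : X -> Y) (E : X -> X -> Prop) x (u : Y -> R) : X -> R :=
  fun z => if dec (E x z) then u (f z) else 0.

Lemma pushA {X Y} (f : X -> Y) E : good f E -> forall t x z, rips_point E t -> 0 < t x -> E x z ->
  push f t (f z) = t z.
Proof.
  intros G t x z Dt Pt Hz. pose proof Dt as [_ [l [[N _] [Hs _]]]].
  rewrite (push_eq _ _ l); auto.
  destruct (classic (In z l)) as [Iz|Nz].
  - rewrite (lsum_delta _ _ z); auto.
    + destruct (dec (f z = f z)); congruence.
    + intros w _. destruct (dec (f w = f z)); [|intros H; exfalso; apply H; reflexivity].
      intros Hw. apply (good_P2 f E G x); auto. apply (star_sub E t); auto; lra.
  - assert (tz : t z = 0) by (apply NNPP; intro; apply Nz, Hs; auto). rewrite tz.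
    apply lsum_zero. intros w Hw. destruct (dec (f w = f z)); auto.
    apply NNPP; intros Hw'. assert (w = z); [|subst; auto].
    apply (good_P2 f E G x); auto. apply (star_sub E t); auto; lra.
Qed.

Lemma lift_list {X Y} (f : X -> Y) E : good f E -> forall x m,
  (forall y, In y m -> img_rel f E (f x) y) -> exists l, map f l = m /\ forall z, In z l -> E x z.
Proof.
  intros G x m. destruct G as [R [S [P1 P3]]]. induction m as [|y m IH]; intros H.
  - exists nil; simpl; split; auto; tauto.
  - destruct (P1 x y (H y (or_introl eq_refl))) as [x' [Hx' <-]].
    destruct IH as [l [Hl Hz]]. intros; apply H; right; auto.
    exists (x' :: l). simpl. split; [congruence|]. intros z [<-|Hz']; auto.
Qed.

Lemma in_lift {X Y} (f : X -> Y) E : good f E -> forall x l m z, map f l = m -> (forall z, In z l -> E x z) ->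
  E x z -> In (f z) m -> In z l.
Proof.
  intros G x l m z <- Hl Hz Hin. apply in_map_iff in Hin. destruct Hin as [z' [Hf Hz']].
  assert (z' = z) by (apply (good_P2 f E G x); auto). subst; auto.
Qed.

Lemma lift_simplex {X Y} (f : X -> Y) E : good f E -> forall x l m, map f l = m -> (forall z, In z l -> E x z) ->
  rips_simplex (img_rel f E) m -> rips_simplex E l.
Proof.
  intros G x l m Hm Hl [N Hp]. split.
  - apply (NoDup_map_inv f). congruence.
  - intros a b Ha Hb. apply (good_L1 f E G x); auto. apply Hp; subst m; apply in_map; auto.
Qed.

Lemma pushB {X Y} (f : X -> Y) E : good f E -> forall u x, rips_point (img_rel f E) u -> 0 < u (f x) ->
  rips_point E (Lx f E x u) /\ push f (Lx f E x u) = u.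
Proof.
  intros G u x Du Pu. pose proof G as [R [S [P1 P3]]].
  pose proof Du as [Hnn [m [[N Hp] [Hs Hsum]]]].
  assert (Im : In (f x) m) by (apply Hs; lra).
  destruct (lift_list f E G x m) as [l [Hl Hz]]. { intros; apply Hp; auto. }
  assert (Sl : rips_simplex E l) by (apply (lift_simplex f E G x l m); auto; split; auto).
  assert (Hsup : forall z, Lx f E x u z <> 0 -> In z l).
  { intros z. unfold Lx. destruct (dec (E x z)) as [Ez|]; [|tauto]. intros Hu.
    apply (in_lift f E G x l m); auto. }
  split.
  - split. { intros z; unfold Lx; destruct (dec (E x z)); auto; lra. }
    exists l. split; auto. split; auto.
    rewrite (lsum_ext _ _ (fun z => u (f z))). rewrite <- lsum_map, Hl; auto.
    intros z Iz. unfold Lx. destruct (dec (E x z)); auto. exfalso; auto.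
  - apply functional_extensionality. intros y.
    rewrite (push_eq _ _ l); auto; [|apply Sl].
    destruct (classic (In y m)) as [Iy|Ny].
    + rewrite <- Hl in Iy. apply in_map_iff in Iy. destruct Iy as [z0 [<- Iz0]].
      rewrite (lsum_delta _ _ z0); auto; [| apply Sl |].
      * destruct (dec (f z0 = f z0)); [|congruence]. unfold Lx. destruct (dec (E x z0)); auto. exfalso; auto.
      * intros w Iw. destruct (dec (f w = f z0)); [|intros H; exfalso; apply H; reflexivity].
        intros _. apply (good_P2 f E G x); auto.
    + assert (uy : u y = 0) by (apply NNPP; intro; apply Ny, Hs; auto). rewrite uy.
      apply lsum_zero. intros w Iw. destruct (dec (f w = y)); auto. exfalso. apply Ny.
      rewrite <- Hl, <- e. apply in_map; auto.
Qed.

Lemma Lx_at {X Y} (f : X -> Y) E x u : reflexive_rel E -> Lx f E x u x = u (f x).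
Proof. intros R. unfold Lx. destruct (dec (E x x)); auto. exfalso; auto. Qed.

Lemma point_open {X} (E : X -> X -> Prop) : rips_open E (rips_point E).
Proof. intros l _ t _ _. exists 1. split; [lra|]. intros s Hs _. apply Hs. Qed.

Lemma point_pos {X} (E : X -> X -> Prop) b : rips_point E b -> exists y, 0 < b y.
Proof.
  intros [Hnn [m [_ [_ Hsum]]]]. destruct (lsum_nonzero m b) as [y [_ Hy]]. lra.
  exists y. specialize (Hnn y). lra.
Qed.

Lemma push_cont {X Y} (f : X -> Y) E V : rips_open (img_rel f E) V ->
  rips_open E (fun a => rips_point E a /\ V (push f a)).
Proof.
  intros HV l Hl t Hct [Dt Vt].
  set (m := ndp (map f l)).
  assert (Nm : NoDup m) by apply NoDup_nodup.
  assert (Im : forall x, In x l -> In (f x) m) by (intros; unfold m, ndp; rewrite nodup_In; apply in_map; auto).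
  assert (Sm : rips_simplex (img_rel f E) m).
  { split; auto. intros a b Ha Hb. unfold m, ndp in Ha, Hb. rewrite nodup_In, in_map_iff in Ha, Hb.
    destruct Ha as [x [<- Hx]]. destruct Hb as [x' [<- Hx']]. exists x, x'. split; auto. apply Hl; auto. }
  assert (Cm : forall s, in_closed_simplex E l s -> in_closed_simplex (img_rel f E) m (push f s)).
  { intros s [Ds Hs]. split. apply push_point; auto. intros y Hy. apply push_support in Hy.
    destruct Hy as [x [Hx <-]]. apply Im; auto. }
  destruct (HV m Sm (push f t) (Cm t Hct) Vt) as [e [ep He]].
  set (k := e / (INR (length l) + 1)).
  assert (Hn : 0 <= INR (length l)) by apply pos_INR.
  assert (kp : 0 < k) by (unfold k; apply Rdiv_lt_0_compat; lra).
  assert (ke : k * (INR (length l) + 1) = e) by (unfold k; field; lra).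
  exists k. split; auto. intros s Hcs Hcl. split; [apply Hcs|].
  apply He; [apply Cm; auto|]. intros y Hy.
  rewrite (push_eq f s l y), (push_eq f t l y); try apply Hl; try apply Hcs; try apply Hct.
  rewrite lsum_minus.
  eapply Rle_lt_trans. apply (lsum_abs_bound _ _ k).
  - intros x Hx. destruct (dec (f x = y)). specialize (Hcl x Hx). lra.
    replace (0 - 0) with 0 by lra. rewrite Rabs_R0. lra.
  - nra.
Qed.

Theorem good_covering {X Y} (f : X -> Y) E : good f E -> surjective f -> rips_covering f E.
Proof.
  intros G Hsurj. pose proof G as [R [S [P1 P3]]].
  split; [|split; [|split]].
  - intros a Da. apply push_point; auto.
  - intros b Db. destruct (point_pos _ b Db) as [y0 Py0]. destruct (Hsurj y0) as [x <-].
    destruct (pushB f E G b x Db Py0) as [D1 D2]. exists (Lx f E x b); auto.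
  - intros V HV. apply push_cont; auto.
  - intros b Db. destruct (point_pos _ b Db) as [y0 Py0].
    exists (fun u => rips_point (img_rel f E) u /\ 0 < u y0).
    split; [apply star_open, point_open|]. split; [split; auto|].
    exists (fun W => exists x, f x = y0 /\ W = (fun t => rips_point E t /\ 0 < t x)).
    split; [|split; [|split]].
    + intros W [x [Hx ->]]. split; [apply star_open, point_open|].
      intros a [Da Pa]. split; auto. split; [apply push_point; auto|].
      rewrite <- Hx, (pushA f E G a x x); auto.
    + intros a Da [_ Pa]. destruct (push_support f a y0 ltac:(lra)) as [x [Hx Hfx]].
      exists (fun t => rips_point E t /\ 0 < t x). split; [exists x; auto|].
      split; auto. destruct Da as [Hnn _]. specialize (Hnn x). lra.
    + intros W1 W2 [x1 [H1 ->]] [x2 [H2 ->]] [a [[Da Pa1] [_ Pa2]]].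
      assert (x1 = x2).
      { apply (good_P2 f E G x1); [apply R | apply (star_sub E a); auto; lra | congruence]. }
      subst; tauto.
    + intros W [x [Hx ->]]. split; [|split].
      * intros t1 t2 [D1 P1'] [D2 P2'] Heq. apply functional_extensionality. intros z.
        destruct (classic (E x z)) as [Ez|Nz].
        -- rewrite <- (pushA f E G t1 x z), <- (pushA f E G t2 x z), Heq; auto.
        -- assert (HZ : forall t, rips_point E t -> 0 < t x -> t z = 0).
           { intros t Dt Pt. apply NNPP; intros Hz. apply Nz. apply (star_sub E t); auto; lra. }
           rewrite (HZ t1), (HZ t2); auto.
      * intros b' Db' [_ Pb']. rewrite <- Hx in Pb'.
        destruct (pushB f E G b' x Db' Pb') as [D1 D2]. exists (Lx f E x b'). split; auto.
        split; auto. rewrite Lx_at; auto.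
      * intros O HO HOW m Hm u Hcu [t [Ot <-]].
        destruct (HOW t Ot) as [Dt Pt].
        assert (ux : push f t (f x) = t x) by (apply (pushA f E G t x x); auto).
        assert (Im : In (f x) m) by (apply (proj2 Hcu); lra).
        destruct (lift_list f E G x m) as [l [Hl Hz]]. { intros; apply (proj2 Hm); auto. }
        assert (Sl : rips_simplex E l) by (apply (lift_simplex f E G x l m); auto).
        assert (Ct : in_closed_simplex E l t).
        { split; auto. intros z Hz0. assert (Ez : E x z) by (apply (star_sub E t); auto; lra).
          apply (in_lift f E G x l m); auto. apply (proj2 Hcu).
          rewrite (pushA f E G t x z); auto. }
        destruct (HO l Sl t Ct Ot) as [e [ep He]].
        exists (Rmin e (t x)). split; [apply Rmin_pos; auto|].
        intros u' Hcu' Hcl.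
        assert (Pu' : 0 < u' (f x)).
        { specialize (Hcl (f x) Im). apply Rabs_def2 in Hcl. pose proof (Rmin_r e (t x)). lra. }
        destruct (pushB f E G u' x (proj1 Hcu') Pu') as [D1 D2].
        exists (Lx f E x u'). split; auto. apply He.
        -- split; auto. intros z. unfold Lx. destruct (dec (E x z)) as [Ez|]; [|tauto].
           intros Hz0. apply (in_lift f E G x l m); auto. apply (proj2 Hcu'); auto.
        -- intros z Iz. assert (Ez := Hz z Iz). unfold Lx. destruct (dec (E x z)); [|tauto].
           rewrite <- (pushA f E G t x z); auto.
           assert (In (f z) m) by (rewrite <- Hl; apply in_map; auto).
           specialize (Hcl (f z) H). pose proof (Rmin_l e (t x)). lra.
Qed.

Lemma backward {X Y} (UX : (X -> X -> Prop) -> Prop) (UY : (Y -> Y -> Prop) -> Prop) (f : X -> Y) :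
  is_uniformity UX -> generates_uniformity UX UY f ->
  chain_lifting UX f -> unique_chain_lifts UX f -> uniform_covering_map UX UY f.
Proof.
  intros HX Hgen CL UCL. split; auto.
  destruct HX as [HR [HS [_ [HI [HU HH]]]]].
  intros D HD.
  destruct (UCL D HD) as [U [HUU Uch]].
  assert (Uuniq : forall x a b, U x a -> U x b -> f a = f b -> a = b).
  { intros x a b Ha Hb Hf. assert (a :: nil = b :: nil) by (apply (Uch x); simpl; auto; congruence).
    congruence. }
  destruct (HH _ (HI U D HUU HD)) as [H [HHU Hhalf]].
  destruct (CL H HHU) as [F0 [HF0 Flift]].
  set (G := fun x y => F0 x y /\ H x y).
  assert (HG : UX G) by (apply HI; auto).
  set (E := fun x x' => H x x' /\ img_rel f G (f x) (f x')).
  assert (HE : UX E).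
  { apply (HU G); auto.
    - intros x y Gxy. split; [apply Gxy|]. exists x, y; auto.
    - intros x. split; [apply HR; auto|]. exists x, x; split; auto. apply (HR G HG).
    - intros x y [Hxy [a [b [Gab [Ha Hb]]]]]. split; [apply (HS H); auto|].
      exists b, a. split; auto. apply (HS G); auto. }
  exists E. split; auto. split.
  - intros x y [Hxy _]. apply (proj2 (Hhalf x x y (HR H HHU x) Hxy)).
  - apply good_covering; [|apply Hgen].
    split; [apply HR; auto|]. split; [apply HS; auto|]. split.
    + intros x y [a [b [[Hab Gab] [Ha Hb]]]].
      assert (Hy : img_rel f F0 (f x) y).
      { destruct Gab as [a' [b' [[Fa' _] [Ha' Hb']]]]. exists a', b'. repeat split; auto; congruence. }
      destruct (Flift x (y :: nil)) as [xs [Hc Hm]]. { simpl; auto. }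
      destruct xs as [|x' [|]]; try discriminate. simpl in Hm. injection Hm as Hm.
      destruct Hc as [Hxx' _]. exists x'. split; auto. split; auto.
      rewrite Hm, <- Ha, <- Hb. auto.
    + intros x a b c [Hxa _] [Hab _] [Hxc _] Hf.
      apply (Uuniq x); auto.
      * apply (proj1 (Hhalf x a b Hxa Hab)).
      * apply (proj1 (Hhalf x x c (HR H HHU x) Hxc)).
Qed.

Theorem mainTheorem3 (X Y : Type)
  (UX : (X -> X -> Prop) -> Prop) (UY : (Y -> Y -> Prop) -> Prop)
  (HX : is_uniformity UX) (HY : is_uniformity UY) (f : X -> Y)
  (Hgen : generates_uniformity UX UY f) :
  uniform_covering_map UX UY f <-> (chain_lifting UX f /\ unique_chain_lifts UX f).
Proof.
  split.
  - intros H. apply (forward UX UY f HX H).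
  - intros [CL UCL]. apply backward; auto.
Qed.
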